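(* Let $\Delta$ be a simplicial complex on $[n]$, let $1\le r\le n$, and let $\Sigma=\Delta^{[1]}\cup\Delta^{[2]}\cup\dots\cup\Delta^{[r]}$. Suppose $\Delta$ is fixed by permutations on $[r]$. If $\widetilde H_i(\Sigma)\neq0$, then $\widetilde H_{i-1}(\Delta)\neq0$.
   Context: A simplicial complex on $[n]=\{1,\dots,n\}$ is a collection of subsets of $[n]$ closed under taking subsets (not every singleton need belong to it). $\widetilde H_i$ denotes reduced simplicial homology with coefficients in a field $\Bbbk$. For a simplicial complex $\Delta$ and an element $v$ (not necessarily a vertex of $\Delta$), $\Delta^{[v]}=\Delta\cup\{F\cup\{v\}:F\in\Delta\}$. For $X\subset[n]$, $\Delta$ is fixed by permutations on $X$ if $\sigma(\Delta)=\{\sigma(F):F\in\Delta\}$ equals $\Delta$ for every permutation $\sigma$ of $[n]$ fixing each element outside $X$. *)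

(* Defs.v *)
From HB Require Import structures.
From mathcomp Require Import all_boot all_order all_algebra all_fingroup.
Set Implicit Arguments. Unset Strict Implicit. Unset Printing Implicit Defensive.
Import GRing.Theory.
Local Open Scope ring_scope.

(* Vertex set [n] = {1,..,n} is modelled by 'I_n (vertex j+1 <-> ordinal j). *)

Definition is_simplicial_complex n (D : {set {set 'I_n}}) : Prop :=
  forall F G : {set 'I_n}, F \in D -> G \subset F -> G \in D.

Definition cone n (D : {set {set 'I_n}}) (v : 'I_n) : {set {set 'I_n}} :=
  D :|: [set v |: F | F in D].

(* Σ = D^[1] ∪ ... ∪ D^[r], i.e. cones over the ordinals 0..r-1 *)
Definition multicone n (D : {set {set 'I_n}}) (r : nat) : {set {set 'I_n}} :=
  [set F | [exists v : 'I_n, (v < r)%N && (F \in cone D v)]].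

Definition fixed_by_perms_on n (D : {set {set 'I_n}}) (X : {set 'I_n}) : Prop :=
  forall s : {perm 'I_n}, (forall x, x \notin X -> s x = x) ->
    [set [set s x | x in F] | F : {set 'I_n} in D] = D.

(* Faces of D with exactly k elements (dimension k-1; k = 0 is the empty face,
   giving the augmented/reduced chain complex). *)
Definition faces n (D : {set {set 'I_n}}) (k : nat) : {set {set 'I_n}} :=
  [set F in D | #|F| == k].

Definition bd_coef (K : fieldType) n (F G : {set 'I_n}) : K :=
  match [pick v in F | G == F :\ v] with
  | Some v => (-1) ^+ #|[set u in F | (u < v)%N]|
  | None => 0
  end.

(* Boundary map C_{k+1} -> C_k (size k+1 faces to size k faces), as a
   matrix acting on row vectors. *)
Definition bd (K : fieldType) n (D : {set {set 'I_n}}) (k : nat)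
  : 'M[K]_(#|faces D k.+1|, #|faces D k|) :=
  \matrix_(i, j) bd_coef K (enum_val i) (enum_val j).

(* Cycles in size-k chains: kernel of the boundary map out of C_k
   (the boundary out of C_0 = C_{-1 in degree} is zero). *)
Definition cycles (K : fieldType) n (D : {set {set 'I_n}}) (k : nat)
  : 'M[K]_(#|faces D k|) :=
  match k as k0 return 'M[K]_(#|faces D k0|) with
  | 0 => 1%:M
  | m.+1 => kermx (bd K D m)
  end.

(* Reduced homology in degree k-1 is nonzero: cycles not contained in
   the row space of boundaries (H = Z / B ≠ 0). *)
Definition rhom_nz_size (K : fieldType) n (D : {set {set 'I_n}}) (k : nat) : bool :=
  ~~ (cycles K D k <= bd K D k)%MS.

(* \tilde H_i(D; K) ≠ 0, for i an integer (zero for i < -1). *)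
Definition rhom_nz (K : fieldType) n (D : {set {set 'I_n}}) (i : int) : bool :=
  match i with
  | Posz m => rhom_nz_size K D m.+1
  | Negz 0 => rhom_nz_size K D 0
  | Negz _ => false
  end.

(* Main.v *)
Require Import Defs.
From HB Require Import structures.
From mathcomp Require Import all_boot all_order all_algebra all_fingroup.
Local Open Scope ring_scope.
Import GRing.Theory.
From Stdlib Require Import ClassicalEpsilon.
Set Implicit Arguments. Unset Strict Implicit. Unset Printing Implicit Defensive.

Definition sgn (K : fieldType) n (F : {set 'I_n}) (x : 'I_n) : K :=
  (-1) ^+ #|[set u in F | (u < x)%N]|.

Definition bnd (K : fieldType) n (c : {set 'I_n} -> K) (G : {set 'I_n}) : K :=
  \sum_F c F * bd_coef K F G.

Lemma setD1_inj n (F : {set 'I_n}) v w : v \in F -> w \in F -> F :\ v = F :\ w -> v = w.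
Proof.
move=> vF wF e; apply/eqP; apply: contraT => neq.
have : v \in F :\ w by rewrite !inE neq.
by rewrite -e !inE eqxx.
Qed.

Lemma bd_coefE (K : fieldType) n (F : {set 'I_n}) v :
  v \in F -> bd_coef K F (F :\ v) = sgn K F v.
Proof.
move=> vF; rewrite /bd_coef; case: pickP => [w /andP [wF /eqP e] | h].
  by rewrite (setD1_inj vF wF e).
by move: (h v); rewrite vF eqxx.
Qed.

Lemma bd_coef0 (K : fieldType) n (F G : {set 'I_n}) :
  (forall v, v \in F -> G != F :\ v) -> bd_coef K F G = 0.
Proof.
move=> h; rewrite /bd_coef; case: pickP => [w /andP [wF e] | //].
by move: (h w wF); rewrite e.
Qed.

Lemma bd_coef_nz (K : fieldType) n (F G : {set 'I_n}) :
  bd_coef K F G != 0 -> exists2 v, v \in F & G = F :\ v.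
Proof.
move=> nz; rewrite /bd_coef in nz; move: nz; case: pickP => [w /andP [wF /eqP e] _ | _].
  by exists w.
by rewrite eqxx.
Qed.

Lemma bd_coef_sum (K : fieldType) n (F G : {set 'I_n}) :
  bd_coef K F G = \sum_(x | x \notin G) (F == x |: G)%:R * sgn K F x.
Proof.
rewrite /bd_coef; case: pickP => [w /andP [wF /eqP ->] | h].
  rewrite (bigD1 w) /=; last by rewrite !inE eqxx.
  rewrite setD1K // eqxx mul1r big1 ?addr0 // => x /andP [xG xw].
  case: eqP => [eF|]; last by rewrite mul0r.
  have : w \in F by [].
  by rewrite {1}eF !inE eqxx eq_sym (negbTE xw).
symmetry; apply: big1 => x xG.
case: eqP => [eF|]; last by rewrite mul0r.
have xF : x \in F by rewrite eF setU11.
move: (h x); rewrite xF eF setU1K //.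
by rewrite -eF eqxx.
Qed.

Lemma bnd_expand (K : fieldType) n (c : {set 'I_n} -> K) G :
  bnd c G = \sum_(x | x \notin G) c (x |: G) * sgn K (x |: G) x.
Proof.
rewrite /bnd.
under eq_bigr => F _ do rewrite bd_coef_sum big_distrr /=.
rewrite exchange_big /=; apply: eq_bigr => x xG.
rewrite (bigD1 (x |: G)) //= eqxx mul1r big1 ?addr0 // => F /negbTE ->.
by rewrite mul0r mulr0.
Qed.

Lemma sgn_U1 (K : fieldType) n (F : {set 'I_n}) x : sgn K (x |: F) x = sgn K F x.
Proof.
rewrite /sgn (_ : [set u in x |: F | (u < x)%N] = [set u in F | (u < x)%N]) //.
by apply/setP => u; rewrite !inE; have [->|ux] := eqVneq u x; rewrite ?ltnn ?andbF.
Qed.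

Lemma sgn_min (K : fieldType) n (F : {set 'I_n}) (o : 'I_n) :
  nat_of_ord o = 0%N -> sgn K F o = 1.
Proof.
move=> ho; rewrite /sgn ho; rewrite (_ : [set u in F | (u < 0)%N] = set0) ?cards0 //.
by apply/setP => u; rewrite !inE ltn0 andbF.
Qed.

Lemma sgn_addlt (K : fieldType) n (F : {set 'I_n}) (x y : 'I_n) :
  y \notin F -> (y < x)%N -> sgn K (y |: F) x = - sgn K F x.
Proof.
move=> yF yx; rewrite /sgn.
rewrite (_ : [set u in y |: F | (u < x)%N] = y |: [set u in F | (u < x)%N]).
  by rewrite cardsU1 !inE (negbTE yF) /= exprS mulN1r.
by apply/setP => u; rewrite !inE; have [->|uy] := eqVneq u y; rewrite ?yx ?eqxx.
Qed.

Lemma sgn_addgt (K : fieldType) n (F : {set 'I_n}) (x y : 'I_n) :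
  (x < y)%N -> sgn K (y |: F) x = sgn K F x.
Proof.
move=> xy; rewrite /sgn (_ : [set u in y |: F | (u < x)%N] = [set u in F | (u < x)%N]) //.
apply/setP => u; rewrite !inE; have [->|uy] := eqVneq u y => //.
by rewrite ltnNge (ltnW xy) /= andbF.
Qed.

Definition conec (K : fieldType) n (o : 'I_n) (c : {set 'I_n} -> K) (F : {set 'I_n}) : K :=
  if o \in F then c (F :\ o) else 0.

Lemma ord_pos0 n (o x : 'I_n) : nat_of_ord o = 0%N -> x != o -> (o < x)%N.
Proof.
move=> ho xo; rewrite ho lt0n; apply: contra xo => /eqP x0.
by apply/eqP/val_inj; rewrite /= x0 ho.
Qed.

Lemma cone_id (K : fieldType) n (o : 'I_n) (c : {set 'I_n} -> K) G :
  nat_of_ord o = 0%N -> bnd (conec o c) G + conec o (bnd c) G = c G.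
Proof.
move=> ho; rewrite bnd_expand /conec.
case: ifP => oG.
  rewrite bnd_expand (bigD1 o (_ : o \notin G :\ o)); last by rewrite !inE eqxx.
  rewrite /= setD1K // sgn_min // mulr1 addrCA.
  rewrite -[RHS]addr0; congr (_ + _).
  have eqp : forall x, (x \notin G :\ o) && (x != o) = (x \notin G).
    by move=> x; rewrite !inE; have [->|] := eqVneq x o; rewrite ?oG //= andbT.
  rewrite (eq_bigl _ _ eqp) -big_split /= big1 // => x xG.
  have xo : x != o by apply: contraNneq xG => ->.
  rewrite setU1r // sgn_U1 setDUl (_ : [set x] :\ o = [set x]); last first.
    by apply/setP => u; rewrite !inE; have [->|] := eqVneq u x; rewrite ?xo ?andbF.
  have -> : sgn K G x = - sgn K (G :\ o) x.
    by rewrite -{1}(setD1K oG) sgn_addlt ?ord_pos0 // !inE eqxx.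
  by rewrite sgn_U1 mulrN addNr.
rewrite addr0 (bigD1 o) ?oG //= setU11 setU1K ?oG // sgn_U1 sgn_min // mulr1.
rewrite big1 ?addr0 // => x /andP [xG xo].
by rewrite !inE oG eq_sym (negbTE xo) mul0r.
Qed.

Lemma bnd_bnd (K : fieldType) n (c : {set 'I_n} -> K) H : bnd (bnd c) H = 0.
Proof.
pose g x y := if (x \notin H) && (y \notin H) && (x != y) then
   c (y |: (x |: H)) * sgn K (y |: (x |: H)) y * sgn K (x |: H) x else 0.
rewrite bnd_expand.
transitivity (\sum_x \sum_y g x y).
  rewrite big_mkcond; apply: eq_bigr => x _ /=.
  case: ifP => xH; last by rewrite big1 // => y _; rewrite /g xH.
  rewrite bnd_expand big_distrl /= big_mkcond; apply: eq_bigr => y _.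
  by rewrite /g xH !inE /= negb_or eq_sym andbC.
have e : forall x y, g x y = (if (x < y)%N then g x y else 0) + (if (y < x)%N then g x y else 0).
  move=> x y; case: (ltngtP x y) => [xy|xy|xy]; rewrite ?addr0 ?add0r //.
  have -> : x = y by apply: val_inj.
  by rewrite /g eqxx andbF.
under eq_bigr => x _ do (under eq_bigr => y _ do rewrite e; rewrite big_split /=).
rewrite big_split /= [X in _ + X]exchange_big /= -big_split /=.
apply: big1 => x _; rewrite -big_split /=; apply: big1 => y _.
case: (ltngtP x y) => xy; rewrite ?addr0 ?add0r //.
have xny : x != y by apply: contraTneq xy => ->; rewrite ltnn.
rewrite /g xny eq_sym xny [(y \notin H) && _]andbC !andbT.
case: ifP => [/andP [xH yH]|]; last by rewrite add0r.
have s1 : sgn K (x |: H) y = - sgn K H y by rewrite sgn_addlt.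
have s2 : sgn K (y |: (x |: H)) x = sgn K H x by rewrite sgn_addgt // sgn_U1.
rewrite (setUCA [set x] [set y] H) !sgn_U1 s1 s2.
by rewrite mulrN mulNr mulrAC addNr.
Qed.

Definition supp_in (K : fieldType) n (c : {set 'I_n} -> K) (P : {set {set 'I_n}}) :=
  forall F, c F != 0 -> F \in P.

Definition acyc (K : fieldType) n (D : {set {set 'I_n}}) k :=
  forall c : {set 'I_n} -> K, supp_in c (faces D k) -> (forall G, bnd c G = 0) ->
  exists d, supp_in d (faces D k.+1) /\ (forall G, bnd d G = c G).

Lemma face_of_bd (K : fieldType) n (D : {set {set 'I_n}}) k F G :
  is_simplicial_complex D -> F \in faces D k.+1 -> bd_coef K F G != 0 -> G \in faces D k.
Proof.
move=> hD; rewrite !inE => /andP [FD /eqP cF] /bd_coef_nz [v vF ->].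
rewrite (hD F) ?subD1set //=.
by move: (cardsD1 v F); rewrite vF cF add1n => -[->].
Qed.

Lemma bd_coef_set0 (K : fieldType) n (F G : {set 'I_n}) : #|F| = 0%N -> bd_coef K F G = 0.
Proof.
move=> h; apply: bd_coef0 => v vF.
by move: h; rewrite (cardD1 v) vF.
Qed.

Lemma sum_supp (K : fieldType) n (P : {set {set 'I_n}}) (f g : {set 'I_n} -> K) :
  supp_in f P -> \sum_F f F * g F = \sum_(i < #|P|) f (enum_val i) * g (enum_val i).
Proof.
move=> hf; rewrite -(big_enum_val (A := mem P) (fun F => f F * g F)) /=.
rewrite [RHS]big_mkcond /=; apply: eq_bigr => F _.
case: ifP => // FP; have : f F = 0 by apply/eqP; apply: contraFT FP => /hf.
by move->; rewrite mul0r.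
Qed.

Lemma sum_ind_ev (K : fieldType) (T : finType) (A : pred T) (a : 'I_#|A| -> K) j :
  \sum_i (enum_val i == enum_val j)%:R * a i = a j.
Proof.
rewrite (bigD1 j) //= eqxx mul1r big1 ?addr0 // => i ij.
by rewrite (inj_eq enum_val_inj) (negbTE ij) mul0r.
Qed.

Lemma sum_ind_ev2 (K : fieldType) (T : finType) (A : pred T) (a : 'I_#|A| -> K) (g : T -> K) :
  \sum_F (\sum_i (enum_val i == F)%:R * a i) * g F = \sum_i a i * g (enum_val i).
Proof.
under eq_bigr => F _ do rewrite big_distrl /=.
rewrite exchange_big /=; apply: eq_bigr => i _.
rewrite (bigD1 (enum_val i)) //= eqxx mul1r big1 ?addr0 // => F /negbTE.
by rewrite eq_sym => ->; rewrite !mul0r.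
Qed.

Lemma supp_ind (K : fieldType) n (P : {set {set 'I_n}}) (a : 'I_#|P| -> K) :
  supp_in (fun F => \sum_i (enum_val i == F)%:R * a i) P.
Proof.
move=> F nz; have [i _ hi] : exists2 i, true & (enum_val i == F)%:R * a i != 0.
  apply/exists_inP; apply: contraR nz => /exists_inPn h.
  by apply/eqP; apply: big1 => i _; apply/eqP; move: (h i isT); rewrite negbK.
move: hi; have [<-|_] := eqVneq (enum_val i) F; [move=> _; exact: enum_valP | by rewrite mul0r eqxx].
Qed.

Lemma mulmx_bd (K : fieldType) n (D : {set {set 'I_n}}) m (x : 'rV[K]_#|faces D m.+1|) j :
  (x *m bd K D m) 0 j = \sum_i x 0 i * bd_coef K (enum_val i) (enum_val j).
Proof. by rewrite mxE; apply: eq_bigr => i _; rewrite mxE. Qed.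

Lemma bnd_out (K : fieldType) n (D : {set {set 'I_n}}) k (c : {set 'I_n} -> K) G :
  is_simplicial_complex D -> supp_in c (faces D k.+1) -> G \notin faces D k -> bnd c G = 0.
Proof.
move=> hD hc GP; apply: big1 => F _.
have [->|/hc FP] := eqVneq (c F) 0; first by rewrite mul0r.
have [->|nz] := eqVneq (bd_coef K F G) 0; first by rewrite mulr0.
by move: (face_of_bd hD FP nz); rewrite (negbTE GP).
Qed.

Lemma bnd_size0 (K : fieldType) n (D : {set {set 'I_n}}) (c : {set 'I_n} -> K) G :
  supp_in c (faces D 0) -> bnd c G = 0.
Proof.
move=> hc; apply: big1 => F _.
have [->|/hc] := eqVneq (c F) 0; first by rewrite mul0r.
by rewrite inE => /andP [_ /eqP /bd_coef_set0 ->]; rewrite mulr0.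
Qed.

Lemma row_cycles (K : fieldType) n (D : {set {set 'I_n}}) k (c : {set 'I_n} -> K) :
  supp_in c (faces D k) -> (forall G, bnd c G = 0) ->
  ((\row_j c (enum_val j) : 'rV[K]_#|faces D k|) <= cycles K D k)%MS.
Proof.
case: k c => [|m] c hc hb; first exact: submx1.
rewrite /cycles; apply/sub_kermxP; apply/rowP => j; rewrite mulmx_bd mxE.
under eq_bigr => i _ do rewrite mxE.
by rewrite -(sum_supp (fun F => bd_coef K F (enum_val j)) hc); apply: hb.
Qed.

Lemma rhom_acyc1 (K : fieldType) n (D : {set {set 'I_n}}) k :
  is_simplicial_complex D -> ~~ rhom_nz_size K D k -> acyc K D k.
Proof.
move=> hD; rewrite /rhom_nz_size negbK => hsub c hc hb.
have hx := row_cycles hc hb.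
case/submxP: (submx_trans hx hsub) => y ey.
exists (fun F => \sum_i (enum_val i == F)%:R * y 0 i); split; first exact: supp_ind.
move=> G; rewrite /bnd sum_ind_ev2.
have [GP|GP] := boolP (G \in faces D k).
  rewrite -(enum_rankK_in GP GP).
  by rewrite -mulmx_bd -ey mxE.
rewrite (_ : c G = 0); last by apply/eqP; apply: contraNT GP => /hc.
apply: big1 => i _.
have [->|nz] := eqVneq (bd_coef K (enum_val i) G) 0; first by rewrite mulr0.
by move: (face_of_bd hD (enum_valP i) nz); rewrite (negbTE GP).
Qed.

Lemma cyc_bnd0 (K : fieldType) n (D : {set {set 'I_n}}) k (x : 'rV[K]_#|faces D k|) :
  is_simplicial_complex D -> (x <= cycles K D k)%MS ->
  forall G, bnd (fun F => \sum_i (enum_val i == F)%:R * x 0 i) G = 0.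
Proof.
case: k x => [|m] x hD hx G; first by apply: bnd_size0; apply: supp_ind.
rewrite /cycles in hx; have hx0 := sub_kermxP hx.
have [GP|GP] := boolP (G \in faces D m); last by apply: (bnd_out hD _ GP); apply: supp_ind.
rewrite /bnd sum_ind_ev2 -(enum_rankK_in GP GP) -mulmx_bd hx0.
by rewrite mxE.
Qed.

Lemma rhom_acyc2 (K : fieldType) n (D : {set {set 'I_n}}) k :
  is_simplicial_complex D -> acyc K D k -> ~~ rhom_nz_size K D k.
Proof.
move=> hD hac; rewrite /rhom_nz_size negbK; apply/row_subP => r0.
set x := row r0 (cycles K D k).
have hx : (x <= cycles K D k)%MS by apply: row_sub.
pose c := fun F => \sum_i (enum_val i == F)%:R * x 0 i.
have hc : supp_in c (faces D k) by apply: supp_ind.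
have hb : forall G, bnd c G = 0 by apply: cyc_bnd0.
have [d [hd hdb]] := hac c hc hb.
apply/submxP; exists (\row_i d (enum_val i)); apply/rowP => j.
rewrite mulmx_bd.
under eq_bigr => i _ do rewrite mxE.
rewrite -(sum_supp (fun F => bd_coef K F (enum_val j)) hd).
by rewrite -/(bnd d _) hdb /c sum_ind_ev.
Qed.

Lemma setD1_notin n (F : {set 'I_n}) v : v \notin F -> F :\ v = F.
Proof. by move=> vF; apply/setP => u; rewrite !inE; have [->|] := eqVneq u v; rewrite ?(negbTE vF). Qed.

Lemma mc_char n (D : {set {set 'I_n}}) r F : is_simplicial_complex D ->
  (F \in multicone D r) = [exists v : 'I_n, (v < r)%N && (F :\ v \in D)].
Proof.
move=> hD; rewrite inE; apply/existsP/existsP => -[v /andP [vr hv]]; exists v; rewrite vr /=.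
  move: hv; rewrite /cone inE => /orP [FD | /imsetP [G GD ->]].
    exact: (hD F _ FD (subD1set F v)).
  apply: (hD G _ GD); apply/subsetP => u; rewrite !inE => /andP [uv /orP [/eqP uv'|//]].
  by rewrite uv' eqxx in uv.
rewrite /cone inE; have [vF|vF] := boolP (v \in F).
  by apply/orP; right; apply/imsetP; exists (F :\ v); rewrite ?setD1K.
by rewrite -(setD1_notin vF) hv.
Qed.

Definition swapc n (r : nat) (P : {set {set 'I_n}}) :=
  forall (a b : 'I_n) (G : {set 'I_n}), (a < r)%N -> (b < r)%N -> a \notin G -> b \notin G ->
    a |: G \in P -> b |: G \in P.

Lemma swap_D n (D : {set {set 'I_n}}) r :
  fixed_by_perms_on D [set v : 'I_n | (v < r)%N] -> swapc r D.
Proof.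
move=> hfix a b G ar br aG bG aGD.
have hs : forall x, x \notin [set v : 'I_n | (v < r)%N] -> tperm a b x = x.
  move=> x; rewrite inE => xr; apply: tpermD.
    by apply: contraNneq xr => <-.
  by apply: contraNneq xr => <-.
rewrite -(hfix _ hs); apply/imsetP; exists (a |: G) => //.
rewrite imsetU1 tpermL; congr (_ |: _).
have hf : forall x, x \in G -> tperm a b x = x.
  move=> x xG; apply: tpermD.
    by apply: contraNneq aG => ->.
  by apply: contraNneq bG => ->.
apply/setP => u; apply/idP/imsetP => [uG|[x xG ->]]; last by rewrite hf.
by exists u; rewrite ?hf.
Qed.

Lemma swap_mc n (D : {set {set 'I_n}}) r :
  is_simplicial_complex D -> swapc r D -> swapc r (multicone D r).
Proof.
move=> hD hs a b G ar br aG bG; rewrite !mc_char // => /existsP [v /andP [vr hv]].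
apply/existsP; have [va|va] := eqVneq v a.
  by exists b; rewrite br /= setU1K //; rewrite va setU1K in hv.
have [vb|vb] := eqVneq v b.
  exists b; rewrite br /= setU1K //.
  have ba : b != a by rewrite -vb.
  move: hv; rewrite vb setD1_notin; last by rewrite !inE negb_or bG andbT.
  by move=> hv; apply: (hD _ _ hv); apply: subsetUr.
exists v; rewrite vr /=.
have e : forall x, x != v -> (x |: G) :\ v = x |: (G :\ v).
  by move=> x xv; apply/setP => u; rewrite !inE; have [->|] := eqVneq u x; rewrite ?xv ?andbT.
rewrite (e a) 1?eq_sym // in hv; rewrite (e b) 1?eq_sym //.
by apply: (hs a) => //; rewrite inE negb_and ?aG ?bG orbT.
Qed.

Lemma mc_complex n (D : {set {set 'I_n}}) r :
  is_simplicial_complex D -> is_simplicial_complex (multicone D r).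
Proof.
move=> hD F G; rewrite !mc_char // => /existsP [v /andP [vr hv]] GF.
apply/existsP; exists v; rewrite vr /=; apply: (hD _ _ hv).
by apply: setSD.
Qed.

Lemma mc_cone n (D : {set {set 'I_n}}) r (v : 'I_n) (G : {set 'I_n}) :
  is_simplicial_complex D -> (v < r)%N -> G \in D -> v |: G \in multicone D r.
Proof.
move=> hD vr GD; rewrite mc_char //; apply/existsP; exists v; rewrite vr /=.
apply: (hD _ _ GD); apply/subsetP => u; rewrite !inE => /andP [uv /orP [/eqP uv'|//]].
by rewrite uv' eqxx in uv.
Qed.

Definition bad n r (D : {set {set 'I_n}}) (o : 'I_n) (F : {set 'I_n}) :=
  (F \in multicone D r) && (o \notin F) && (o |: F \notin multicone D r).

Lemma bad_notD n r (D : {set {set 'I_n}}) (o : 'I_n) F :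
  is_simplicial_complex D -> (o < r)%N -> bad r D o F -> F \notin D.
Proof.
move=> hD hor /andP [_ hF]; apply: contra hF => FD.
by rewrite (mc_cone hD hor FD).
Qed.

Lemma bad_R n r (D : {set {set 'I_n}}) (o : 'I_n) F :
  is_simplicial_complex D -> (o < r)%N -> bad r D o F -> exists2 x, x \in F & (x < r)%N.
Proof.
move=> hD hor hb; have := bad_notD hD hor hb.
case/andP: hb => /andP [+ _] _; rewrite mc_char // => /existsP [v /andP [vr hv]].
have [vF|vF] := boolP (v \in F); first by exists v.
by rewrite -(setD1_notin vF) hv.
Qed.

Lemma L_bad n r (D : {set {set 'I_n}}) (o : 'I_n) F (x : 'I_n) :
  is_simplicial_complex D -> swapc r D -> (o < r)%N -> bad r D o F ->
  x \in F -> (x < r)%N -> F :\ x \in D.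
Proof.
move=> hD hs hor hb xF xr; have := bad_notD hD hor hb.
case/andP: hb => /andP [+ _] _; rewrite mc_char // => /existsP [v /andP [vr hv]].
have [vF|vF] := boolP (v \in F); last by rewrite -(setD1_notin vF) hv.
have [<- _ //|vx] := eqVneq v x.
move=> _; set G := F :\ v :\ x.
have e1 : F :\ v = x |: G by rewrite /G setD1K // !inE xF andbT eq_sym vx.
have e2 : F :\ x = v |: G.
  by rewrite /G setDDl (setUC [set v] [set x]) -setDDl setD1K // !inE vF andbT.
rewrite e2; apply: (hs x) => //; last by rewrite -e1.
  by rewrite /G !inE eqxx.
by rewrite /G !inE eqxx /= andbF.
Qed.

Lemma bnd_ext (K : fieldType) n (c1 c2 : {set 'I_n} -> K) G :
  (forall F, c1 F = c2 F) -> bnd c1 G = bnd c2 G.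
Proof. by move=> h; apply: eq_bigr => F _; rewrite h. Qed.

Lemma bnd_sub (K : fieldType) n (c1 c2 : {set 'I_n} -> K) G :
  bnd (fun F => c1 F - c2 F) G = bnd c1 G - bnd c2 G.
Proof. by rewrite /bnd -sumrB; apply: eq_bigr => F _; rewrite mulrBl. Qed.

Lemma bnd_add (K : fieldType) n (c1 c2 : {set 'I_n} -> K) G :
  bnd (fun F => c1 F + c2 F) G = bnd c1 G + bnd c2 G.
Proof. by rewrite /bnd -big_split; apply: eq_bigr => F _; rewrite mulrDl. Qed.

Lemma bnd_sum (K : fieldType) n (I : finType) (P : pred I) (c : I -> {set 'I_n} -> K) G :
  bnd (fun F => \sum_(A | P A) c A F) G = \sum_(A | P A) bnd (c A) G.
Proof.
rewrite /bnd; under eq_bigr => F _ do rewrite big_distrl /=.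
by rewrite exchange_big.
Qed.

Lemma conec0 (K : fieldType) n (o : 'I_n) (c : {set 'I_n} -> K) G :
  (forall F, c F = 0) -> conec o c G = 0.
Proof. by move=> h; rewrite /conec h; case: ifP. Qed.

Lemma bnd_size (K : fieldType) n (P : {set {set 'I_n}}) k (c : {set 'I_n} -> K) H :
  supp_in c (faces P k) -> bnd c H != 0 -> (#|H|.+1 = k)%N.
Proof.
move=> hc nz; have [F _ hF] : exists2 F, true & c F * bd_coef K F H != 0.
  apply/exists_inP; apply: contraR nz => /exists_inPn h.
  by apply/eqP; apply: big1 => F _; apply/eqP; move: (h F isT); rewrite negbK.
have cF : c F != 0 by apply: contraNneq hF => ->; rewrite mul0r.
have bF : bd_coef K F H != 0 by apply: contraNneq hF => ->; rewrite mulr0.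
move: (hc F cF); rewrite inE => /andP [_ /eqP <-].
case/bd_coef_nz: bF => v vF ->.
by rewrite (cardsD1 v F) vF.
Qed.

Lemma bnd_supp (K : fieldType) n (P : {set {set 'I_n}}) k (c : {set 'I_n} -> K) :
  is_simplicial_complex P -> supp_in c (faces P k.+1) -> supp_in (bnd c) (faces P k).
Proof.
move=> hP hc H nz; apply: contraT => HP.
by rewrite (bnd_out hP hc HP) eqxx in nz.
Qed.

Lemma cone_fill (K : fieldType) n r (D : {set {set 'I_n}}) (o : 'I_n) s (c : {set 'I_n} -> K) :
  nat_of_ord o = 0%N ->
  supp_in c (faces (multicone D r) s) -> (forall F, c F != 0 -> ~~ bad r D o F) ->
  (forall G, bnd c G = 0) ->
  exists d, supp_in d (faces (multicone D r) s.+1) /\ (forall G, bnd d G = c G).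
Proof.
move=> ho hc hnb hb; exists (conec o c); split.
  move=> F; rewrite /conec; case: ifP => [oF nz|]; last by rewrite eqxx.
  have := hc _ nz; rewrite inE => /andP [FS /eqP cF].
  have on : o \notin F :\ o by rewrite !inE eqxx.
  have := hnb _ nz; rewrite /bad FS on /= negbK setD1K // => FS'.
  by rewrite inE FS' /= (cardsD1 o F) oF cF.
move=> G; have := cone_id c G ho.
by rewrite (conec0 _ _ hb) addr0.
Qed.

Definition Rs n r : {set 'I_n} := [set v : 'I_n | (v < r)%N].

Lemma inRs n r (x : 'I_n) : (x \in Rs n r) = (x < r)%N.
Proof. by rewrite inE. Qed.

Lemma setIU1_in n r (x : 'I_n) (G : {set 'I_n}) : (x < r)%N -> (x |: G) :&: Rs n r = x |: (G :&: Rs n r).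
Proof. by move=> xr; rewrite setIUl (setIidPl _) // sub1set inRs. Qed.

Lemma setIU1_out n r (x : 'I_n) (G : {set 'I_n}) : ~~ (x < r)%N -> (x |: G) :&: Rs n r = G :&: Rs n r.
Proof.
move=> xr; apply/setP => u; rewrite !inE; have [->|] := eqVneq u x => //=.
by rewrite (negbTE xr) !andbF.
Qed.

Lemma setID1R n r (a : 'I_n) (G : {set 'I_n}) : (G :\ a) :&: Rs n r = (G :&: Rs n r) :\ a.
Proof. by apply/setP => u; rewrite !inE andbA. Qed.

Lemma Lt n r (D : {set {set 'I_n}}) (o t : 'I_n) (H : {set 'I_n}) :
  swapc r D -> (o < r)%N -> (t < r)%N -> o \notin H -> t \notin H -> t |: H \in D -> o |: H \in D.
Proof. by move=> hs hor tr oH tH; apply: (hs t). Qed.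

Lemma two_pt n r (D : {set {set 'I_n}}) (o t1 t2 v : 'I_n) (H E : {set 'I_n}) :
  is_simplicial_complex D -> swapc r D -> (o < r)%N -> o \notin H ->
  (t1 < r)%N -> (t2 < r)%N -> t1 != t2 -> t1 \notin H -> t2 \notin H ->
  (v < r)%N -> t1 |: (t2 |: H) \subset E -> E :\ v \in D -> o |: H \in D.
Proof.
move=> hD hs hor oH t1r t2r t12 t1H t2H vr sE ED.
have [vH|vH] := boolP (v \in H).
  have t1v : t1 != v by apply: contraNneq t1H => ->.
  have t2v : t2 != v by apply: contraNneq t2H => ->.
  have sub : t1 |: (t2 |: (H :\ v)) \subset E :\ v.
    apply/subsetP => u; rewrite !inE => /orP [/eqP->|/orP [/eqP->|/andP [uv uH]]];
      rewrite ?t1v ?t2v ?uv /=; apply: (subsetP sE); rewrite !inE ?eqxx ?uH ?orbT //.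
  have D1 := hD _ _ ED sub.
  have D2 : v |: (t2 |: (H :\ v)) \in D.
    apply: (hs t1) => //; rewrite !inE ?negb_or ?negb_and ?eqxx //=.
      by rewrite t12 /= t1H orbT.
    by rewrite eq_sym t2v.
  have e : v |: (t2 |: (H :\ v)) = t2 |: H by rewrite setUCA setD1K.
  rewrite e in D2; exact: (Lt hs hor t2r oH t2H D2).
pose t := if v == t1 then t2 else t1.
have tr : (t < r)%N by rewrite /t; case: ifP.
have tH : t \notin H by rewrite /t; case: ifP.
have tv : t != v.
  rewrite /t; case: ifP => [/eqP ->|/negbT ne]; first by rewrite eq_sym.
  by rewrite eq_sym.
apply: (Lt hs hor tr oH tH); apply: (hD _ _ ED).
apply/subsetP => u; rewrite !inE => /orP [/eqP ->|uH].
  rewrite tv /=; apply: (subsetP sE); rewrite /t !inE; case: ifP => _; by rewrite eqxx ?orbT.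
rewrite (_ : u != v); last by apply: contraNneq vH => <-.
by apply: (subsetP sE); rewrite !inE uH !orbT.
Qed.

Lemma comp_lemma (K : fieldType) n r (D : {set {set 'I_n}}) (o : 'I_n) k
  (A : {set 'I_n}) (a : 'I_n) (z : {set 'I_n} -> K) :
  is_simplicial_complex D -> swapc r D -> nat_of_ord o = 0%N -> (o < r)%N ->
  (forall x, x \in A -> (x < r)%N) -> o \notin A -> a \in A ->
  acyc K D k -> supp_in z (faces (multicone D r) k.+1) -> (forall G, bnd z G = 0) ->
  exists y, supp_in y (faces (multicone D r) k.+2) /\
    (forall F, y F != 0 -> F :&: Rs n r = A) /\
    (forall F, bad r D o F -> F :&: Rs n r = A -> bnd y F = z F).
Proof.
move=> hD hs ho hor hA oA aA hac hz hzb.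
set S := multicone D r.
have hS : is_simplicial_complex S := mc_complex (r := r) hD.
have ar : (a < r)%N := hA a aA.
have oa : o != a by apply: contraNneq oA => ->.
set A' := A :\ a.
have oA' : o \notin A' by rewrite !inE negb_and oA orbT.
have aA' : a \notin A' by rewrite !inE eqxx.
have RA : forall G (x : 'I_n), G :&: Rs n r = A' -> (x < r)%N -> (x \in G) = (x \in A').
  by move=> G x <- xr; rewrite !inE xr andbT.
pose w G := if (G :&: Rs n r == A') && bad r D o (a |: G) then z (a |: G) else 0.
have hw : supp_in w (faces D k).
  move=> G; rewrite /w; case: ifP => [/andP [/eqP GR hb] nz|]; last by rewrite eqxx.
  have aG : a \notin G by rewrite (RA _ _ GR ar).
  have := hz _ nz; rewrite inE => /andP [_ /eqP cz].
  rewrite inE; apply/andP; split.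
    by have := L_bad hD hs hor hb (setU11 a G) ar; rewrite setU1K.
  by move: cz; rewrite cardsU1 aG add1n => -[->].
have hwb : forall H, o |: H \notin D -> bnd w H = 0.
  move=> H oHD.
  have [HR|HR] := eqVneq (H :&: Rs n r) A'; last first.
    rewrite bnd_expand big1 // => x xH; rewrite /w.
    case: ifP => [/andP [/eqP xHR hb]|]; last by rewrite mul0r.
    have xr : (x < r)%N.
      by apply: contraTT HR => xr; rewrite negbK -(setIU1_out _ xr) xHR.
    have axH : a \notin x |: H by rewrite (RA _ _ xHR ar).
    have oxH : o \notin x |: H by rewrite (RA _ _ xHR hor).
    have := L_bad hD hs hor hb (setU11 a _) ar; rewrite setU1K // => xHD.
    have oH : o \notin H by apply: contra oxH => oH; rewrite !inE oH orbT.
    by move: oHD; rewrite (Lt hs hor xr oH xH xHD).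
  have oH : o \notin H by rewrite (RA _ _ HR hor).
  have aH : a \notin H by rewrite (RA _ _ HR ar).
  rewrite -[RHS]oppr0 -(hzb (a |: H)) !bnd_expand (bigD1 a) //=.
  have -> : w (a |: H) = 0.
    rewrite /w setIU1_in // HR (_ : (a |: A' == A') = false) //.
    by apply/negbTE; apply: contraNneq aA' => <-; apply: setU11.
  rewrite mul0r add0r -sumrN.
  have eqp : forall x, (x \notin H) && (x != a) = (x \notin a |: H).
    by move=> x; rewrite !inE negb_or andbC.
  rewrite (eq_bigl _ _ eqp); apply: eq_bigr => x xaH.
  have xa : x != a by apply: contraNneq xaH => ->; apply: setU11.
  have xH : x \notin H by apply: contra xaH => xH; rewrite !inE xH orbT.
  case: (ltnP x r) => xr.
    have -> : w (x |: H) = 0.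
      rewrite /w setIU1_in // HR (_ : (x |: A' == A') = false) //.
      apply/negbTE; apply: contraNneq xH => e.
      by rewrite (RA _ _ HR xr) -e setU11.
    have -> : z (x |: (a |: H)) = 0.
      apply/eqP; apply: contraT => nz; have := hz _ nz; rewrite inE => /andP [E _].
      move: E; rewrite mc_char // => /existsP [v /andP [vr hv]].
      by move: oHD; rewrite (two_pt hD hs hor oH xr ar xa xH aH vr (subxx _) hv).
    by rewrite !mul0r oppr0.
  have xr' : ~~ (x < r)%N by rewrite -leqNgt.
  have ax : (a < x)%N by apply: leq_trans ar xr.
  rewrite /w setIU1_out // HR eqxx /= (setUCA [set a] [set x] H).
  rewrite !sgn_U1 sgn_addlt // mulrN opprK.
  case: ifP => // hnb; apply/eqP; rewrite mul0r eq_sym mulf_eq0; apply/orP; left.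
  apply: contraFT hnb => nz; have := hz _ nz; rewrite inE => /andP [FS _].
  have ox : o != x by apply: contraTneq hor => ->.
  have oF : o \notin x |: (a |: H) by rewrite !inE !negb_or oa ox oH.
  rewrite /bad FS oF /=; apply: contra oHD; rewrite mc_char // => /existsP [v /andP [vr hv]].
  apply: (two_pt hD hs hor oH hor ar oa oH aH vr _ hv).
  by rewrite setUS // subsetUr.
pose w' G := w G - conec o (bnd w) G.
have hw' : supp_in w' (faces D k).
  move=> G nz; have [/eqP w0|wn] := boolP (w G == 0); last exact: hw.
  move: nz; rewrite /w' w0 sub0r oppr_eq0 /conec; case: ifP => [oG nz|]; last by rewrite eqxx.
  have GD : G \in D.
    by apply: contraT => nG; move: nz; rewrite hwb ?eqxx // setD1K.
  rewrite inE GD /= -(bnd_size hw nz) (cardsD1 o G) oG.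
  by [].
have hw'b : forall G, bnd w' G = 0.
  move=> G; rewrite /w' bnd_sub.
  have := cone_id (bnd w) G ho; rewrite (conec0 _ _ (bnd_bnd w)) addr0 => ->.
  by rewrite subrr.
have [u [hu hub]] := hac w' hw' hw'b.
pose y (F : {set 'I_n}) := if (a \in F) && ((F :\ a) :&: Rs n r == A') then - u (F :\ a) else 0.
exists y; split; [|split].
- move=> F; rewrite /y; case: ifP => [/andP [aF _] nz|]; last by rewrite eqxx.
  move: nz; rewrite oppr_eq0 => /hu; rewrite inE => /andP [FaD /eqP cF].
  rewrite inE -(setD1K aF) (mc_cone hD ar FaD) /= cardsU1 !inE eqxx /= cF.
  by [].
- move=> F; rewrite /y; case: ifP => [/andP [aF /eqP FR] _|]; last by rewrite eqxx.
  by rewrite -(setD1K aF) setIU1_in // FR setD1K.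
move=> F hb FR.
have aF : a \in F by move: aA; rewrite -FR inE => /andP [].
have oF : o \notin F by case/andP: hb => /andP [].
have FaR : (F :\ a) :&: Rs n r = A' by rewrite setID1R FR.
have oFa : o \notin F :\ a by rewrite !inE negb_and oF orbT.
have FnD := bad_notD hD hor hb.
have -> : z F = bnd u (F :\ a).
  rewrite hub /w' /conec (negbTE oFa) subr0 /w FaR eqxx setD1K //.
  by rewrite hb.
rewrite !bnd_expand [RHS](bigD1 a) /=; last by rewrite !inE eqxx.
rewrite setD1K // (_ : u F = 0) ?mul0r ?add0r; last first.
  by apply/eqP; apply: contraT => /hu; rewrite inE (negbTE FnD).
have eqp : forall x, (x \notin F :\ a) && (x != a) = (x \notin F).
  by move=> x; rewrite !inE; have [->|] := eqVneq x a; rewrite ?aF //= andbT.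
rewrite (eq_bigl _ _ eqp); apply: eq_bigr => x xF.
have xa : x != a by apply: contraNneq xF => ->.
have e : (x |: F) :\ a = x |: (F :\ a).
  by apply/setP => v; rewrite !inE; have [->|] := eqVneq v x; rewrite ?xa.
rewrite /y setU1r // e /=.
have xFa : x \notin F :\ a by rewrite !inE negb_and xF orbT.
case: (ltnP x r) => xr.
  rewrite setIU1_in // FaR (_ : (x |: A' == A') = false); last first.
    apply/negbTE; apply: contraNneq xF => ee.
    have : x \in A' by rewrite -ee setU11.
    by rewrite -FaR !inE xr andbT => /andP [].
  rewrite (_ : u (x |: (F :\ a)) = 0) ?mul0r //.
  apply/eqP; apply: contraT => /hu; rewrite inE => /andP [xD _].
  have aFa : a \notin F :\ a by rewrite !inE eqxx.
  by move: FnD; rewrite -{1}(setD1K aF) (hs x a _ xr ar xFa aFa xD).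
have xr' : ~~ (x < r)%N by rewrite -leqNgt.
have ax : (a < x)%N by apply: leq_trans ar xr.
rewrite setIU1_out // FaR eqxx !sgn_U1.
have -> : sgn K F x = - sgn K (F :\ a) x.
  by rewrite -{1}(setD1K aF) sgn_addlt // !inE eqxx.
by rewrite mulrN mulNr opprK.
Qed.

Lemma other_comp (K : fieldType) n r (D : {set {set 'I_n}}) (o : 'I_n) (A : {set 'I_n})
  (c : {set 'I_n} -> K) F :
  is_simplicial_complex D -> swapc r D -> (o < r)%N -> o \notin A ->
  (forall G, c G != 0 -> G \in multicone D r) ->
  (forall G, c G != 0 -> G :&: Rs n r = A) ->
  bad r D o F -> F :&: Rs n r != A -> bnd c F = 0.
Proof.
move=> hD hs hor oA hcS hcR hb FR; rewrite bnd_expand big1 // => x xF.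
have [->|nz] := eqVneq (c (x |: F)) 0; first by rewrite mul0r.
have xR := hcR _ nz; have xS := hcS _ nz.
have xr : (x < r)%N by apply: contraTT FR => xr; rewrite negbK -(setIU1_out _ xr) xR.
case/andP: hb => /andP [_ oF] oFS.
have ox : o != x.
  apply: contraNneq oA => ->; rewrite -xR !inE eqxx /=; by [].
have oxF : o \notin F := oF.
move: oFS; rewrite (swap_mc hD hs xr hor xF oxF xS) //.
Qed.

Lemma main_step (K : fieldType) n r (D : {set {set 'I_n}}) (o : 'I_n) k :
  is_simplicial_complex D -> swapc r D -> nat_of_ord o = 0%N -> (o < r)%N ->
  acyc K D k -> acyc K (multicone D r) k.+1.
Proof.
move=> hD hs ho hor hac z hz hzb.
set S := multicone D r.
have hS : is_simplicial_complex S := mc_complex (r := r) hD.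
pose comps := [set A : {set 'I_n} | (A \subset Rs n r) && (o \notin A) && (A != set0)].
have H : forall A, exists y : {ffun {set 'I_n} -> K}, A \in comps ->
    [/\ supp_in (fun F => y F) (faces S k.+2),
      (forall F, y F != 0 -> F :&: Rs n r = A) &
      (forall F, bad r D o F -> F :&: Rs n r = A -> bnd (fun F => y F) F = z F)].
  move=> A; have [hA|hA] := boolP (A \in comps); last by exists [ffun _ => 0].
  move: hA; rewrite inE => /andP [/andP [AR oA] /set0Pn [a aA]].
  have hAr : forall x, x \in A -> (x < r)%N.
    by move=> x xA; move: (subsetP AR x xA); rewrite inRs.
  have [y [h1 [h2 h3]]] := comp_lemma hD hs ho hor hAr oA aA hac hz hzb.
  exists [ffun F => y F] => _; split.
  - by move=> F; rewrite ffunE; apply: h1.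
  - by move=> F; rewrite ffunE; apply: h2.
  - by move=> F hb FR; rewrite -(h3 F hb FR); apply: bnd_ext => G; rewrite ffunE.
pose Y A := proj1_sig (constructive_indefinite_description _ (H A)).
have HY := fun A => proj2_sig (constructive_indefinite_description _ (H A)).
pose y F := \sum_(A in comps) Y A F.
have hy : supp_in y (faces S k.+2).
  move=> F nz; have [A Ac hA] : exists2 A, A \in comps & Y A F != 0.
    apply/exists_inP; apply: contraR nz => /exists_inPn h.
    by apply/eqP; rewrite /y; apply: big1 => B BC; apply/eqP; move: (h B BC); rewrite negbK.
  by case: (HY A Ac) => h1 _ _; apply: h1.
have hyb : forall F, bad r D o F -> bnd y F = z F.
  move=> F hb; rewrite /y bnd_sum.
  have FC : F :&: Rs n r \in comps.
    rewrite inE subsetIr; case/andP: (hb) => /andP [_ oF] _.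
    rewrite !inE negb_and oF /=; have [x xF xr] := bad_R hD hor hb.
    by apply/set0Pn; exists x; rewrite !inE xF xr.
  rewrite (bigD1 _ FC) /= big1 ?addr0.
    by case: (HY _ FC) => _ _ h3; apply: h3.
  move=> A /andP [Ac AF]; case: (HY _ Ac) => h1 h2 _.
  have oA : o \notin A.
    have cP : forall B, B \in comps -> o \notin B.
      by move=> B; rewrite inE => /andP [/andP [_ ->]].
    exact: cP A Ac.
  apply: (other_comp hD hs hor oA _ h2 hb); last by rewrite eq_sym.
  by move=> G /h1; rewrite inE => /andP [].
pose z' G := z G - bnd y G.
have hz' : supp_in z' (faces S k.+1).
  move=> G nz; have [/eqP z0|zn] := boolP (z G == 0); last exact: hz.
  move: nz; rewrite /z' z0 sub0r oppr_eq0; apply: (bnd_supp hS hy).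
have hnb : forall F, z' F != 0 -> ~~ bad r D o F.
  by move=> F; apply: contra_neqN => hb; rewrite /z' hyb // subrr.
have hz'b : forall G, bnd z' G = 0.
  by move=> G; rewrite /z' bnd_sub hzb bnd_bnd subrr.
have [d [hd hdb]] := cone_fill ho hz' hnb hz'b.
exists (fun F => y F + d F); split.
  move=> F nz; have [/eqP y0|yn] := boolP (y F == 0); last exact: hy.
  by move: nz; rewrite y0 add0r => /hd.
by move=> G; rewrite bnd_add hdb /z' addrC subrK.
Qed.

Lemma acyc_mc0 (K : fieldType) n r (D : {set {set 'I_n}}) (o : 'I_n) :
  is_simplicial_complex D -> nat_of_ord o = 0%N -> (o < r)%N ->
  acyc K (multicone D r) 0.
Proof.
move=> hD ho hor c hc hb; apply: (cone_fill ho hc _ hb) => F nz.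
have := hc _ nz; rewrite inE => /andP [FS /eqP /cards0_eq F0].
rewrite /bad FS negb_and /= negbK; apply/orP; right.
rewrite negbK F0; apply: (mc_cone hD hor).
move: FS; rewrite mc_char // => /existsP [v /andP [_ hv]].
by move: hv; rewrite F0 set0D.
Qed.

Unset Implicit Arguments.

Theorem lemma3p2 (K : fieldType) (n r : nat) (D : {set {set 'I_n}})
  (hD : is_simplicial_complex D) (hr1 : (1 <= r)%N) (hrn : (r <= n)%N)
  (hfix : fixed_by_perms_on D [set v : 'I_n | (v < r)%N])
  (i : int) :
  rhom_nz K (multicone D r) i -> rhom_nz K D (i - 1).
Proof.
have n0 : (0 < n)%N by apply: leq_trans hr1 hrn.
pose o : 'I_n := Ordinal n0.
have ho : nat_of_ord o = 0%N by [].
have hor : (o < r)%N by [].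
have hs := swap_D hfix.
have hS := mc_complex (r := r) hD.
case: i => [m|m].
  have -> : rhom_nz K D (Posz m - 1) = rhom_nz_size K D m.
    case: m => [|m] //=.
    by rewrite subn1.
  rewrite /=; apply: contraLR => h.
  apply: (rhom_acyc2 hS); apply: (main_step hD hs ho hor).
  exact: rhom_acyc1 hD h.
case: m => [|m] //= h.
have := rhom_acyc2 hS (acyc_mc0 (K := K) hD ho hor).
by rewrite h.
Qed.
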